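(* For every $n\ge 3$, $\lceil \log_2 n\rceil\le \mathrm{isat}(n,\mathcal{N})\le 2n$.
   Context: $\mathcal{B}_n$ denotes the Boolean lattice $(2^{[n]},\subseteq)$. A family $\mathcal{F}\subseteq 2^{[n]}$ (ordered by inclusion) is induced-$\mathcal{P}$-saturated if it contains no induced copy of $\mathcal{P}$ (an injection $f$ with $u\le v\iff f(u)\subseteq f(v)$) but every family $\mathcal{F}'$ with $\mathcal{F}\subsetneq\mathcal{F}'\subseteq 2^{[n]}$ contains one. $\mathrm{isat}(n,\mathcal{P})$ is the minimum size of an induced-$\mathcal{P}$-saturated family in $\mathcal{B}_n$. $\mathcal{N}$ is the four-element poset on $\{A,B,C,D\}$ whose only strict relations are $A<B$, $C<B$, $C<D$ (so $A\parallel C$, $A\parallel D$, $B\parallel D$). *)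

(* Defs.v *)
From mathcomp Require Import all_boot.
Set Implicit Arguments. Unset Strict Implicit. Unset Printing Implicit Defensive.

(* The poset N on 'I_4 : A = 0, B = 1, C = 2, D = 3, with strict relations
   A < B, C < B, C < D.  Nle is its (reflexive) order relation. *)
Definition Nle (u v : 'I_4) : bool :=
  (u == v) || [|| (val u == 0) && (val v == 1),
                  (val u == 2) && (val v == 1) |
                  (val u == 2) && (val v == 3)].

Definition has_induced_copy (P : finType) (le : rel P) (n : nat)
  (F : {set {set 'I_n}}) : Prop :=
  exists f : P -> {set 'I_n},
    injective f /\ (forall u, f u \in F) /\
    (forall u v, le u v = (f u \subset f v)).

Definition induced_saturated (P : finType) (le : rel P) (n : nat)
  (F : {set {set 'I_n}}) : Prop :=
  ~ has_induced_copy le F /\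
  (forall F' : {set {set 'I_n}}, F \proper F' -> has_induced_copy le F').

(* Main.v *)
Require Import Defs.
From mathcomp Require Import all_boot.
Set Implicit Arguments. Unset Strict Implicit. Unset Printing Implicit Defensive.

Lemma Nle_antisym (u v : 'I_4) : Nle u v -> Nle v u -> u = v.
Proof.
by case: u => [[|[|[|[|?]]]] Hu] //; case: v => [[|[|[|[|?]]]] Hv] //= _ _;
  apply: val_inj.
Qed.

Lemma Nle_nottop (u : 'I_4) : exists v, Nle v u = false.
Proof.
case: u => [[|[|[|[|?]]]] Hu] //.
- by exists (@Ordinal 4 2 isT).
- by exists (@Ordinal 4 3 isT).
- by exists (@Ordinal 4 1 isT).
- by exists (@Ordinal 4 1 isT).
Qed.

Lemma Nle_twin (p q : 'I_4) : p != q ->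
  exists r : 'I_4, [/\ r != p, r != q & (Nle p r != Nle q r) || (Nle r p != Nle r q)].
Proof.
have o0 : 0 < 4 by []. have o1 : 1 < 4 by []. have o2 : 2 < 4 by []. have o3 : 3 < 4 by [].
case: p => [[|[|[|[|?]]]] Hp] //; case: q => [[|[|[|[|?]]]] Hq] // Hne;
  try by (exfalso; move: Hne; apply/negP/negPn/eqP/val_inj).
all: first [ by exists (Ordinal o0) | by exists (Ordinal o1) | by exists (Ordinal o2) | by exists (Ordinal o3) ].
Qed.

Set Implicit Arguments. Unset Strict Implicit. Unset Printing Implicit Defensive.

Section Low.
Variable n : nat.
Implicit Types F : {set {set 'I_n}}.

Lemma sat_ext F X : induced_saturated Nle F -> X \notin F ->
  exists f : 'I_4 -> {set 'I_n}, [/\ injective f, (forall u, f u \in X |: F),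
    (forall u v, Nle u v = (f u \subset f v)) & exists p, f p = X].
Proof.
move=> [nc sat] XF.
have: F \proper X |: F by rewrite properUr // sub1set.
move/sat=> [f [fi [fF fle]]].
exists f; split => //.
case: (pickP (fun p => f p == X)) => [p /eqP E|none]; first by exists p.
exfalso; apply: nc; exists f; split => //; split => // u.
by have := fF u; rewrite !inE (none u).
Qed.

Lemma sat_setT F : induced_saturated Nle F -> setT \in F.
Proof.
move=> S; apply/negPn/negP => TF.
have [f [_ _ fle [p fp]]] := sat_ext S TF.
have [v hv] := Nle_nottop p.
by move: hv; rewrite fle fp subsetT.
Qed.

Lemma sat_sep F (i j : 'I_n) : induced_saturated Nle F -> i != j ->
  (forall T, T \in F -> (i \in T) = (j \in T)) -> False.
Proof.
move=> S ij inv.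
have TF := sat_setT S.
pose P := [pred T : {set 'I_n} | (T \in F) && (i \in T)].
have PT : P setT by rewrite /= TF inE.
case: (@arg_minnP _ setT P (fun T : {set 'I_n} => #|T|) PT) => W /andP[WF iW] Wmin.
have Wminimal : forall T, T \in F -> i \in T -> T \subset W -> T = W.
  move=> T TF' iT sTW; apply/eqP; rewrite eqEcard sTW /=.
  by apply: Wmin; rewrite /= TF' iT.
pose X := W :\ j.
have iX : i \in X by rewrite !inE iW ij.
have jX : j \notin X by rewrite !inE eqxx.
have XF : X \notin F by apply/negP => /inv; rewrite iX (negbTE jX).
have XW : X != W by apply/negP => /eqP E; move: (inv _ WF); rewrite -E iX (negbTE jX).
have up : forall T, T \in F -> (X \subset T) = (W \subset T).
  move=> T TF'; apply/idP/idP => H.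
    apply/subsetP => x xW; case: (eqVneq x j) => [->|xj].
      by rewrite -(inv _ TF'); apply: (subsetP H).
    by apply: (subsetP H); rewrite !inE xj.
  by apply: subset_trans H; apply: subD1set.
have down : forall T, T \in F -> T != W -> (T \subset X) = (T \subset W).
  move=> T TF' TW; apply/idP/idP => H.
    by apply: subset_trans H _; apply: subD1set.
  apply/subsetP => x xT; rewrite !inE (subsetP H) // andbT.
  apply/negP => /eqP xj; subst x.
  by move: TW; rewrite (Wminimal T TF') ?eqxx // (inv _ TF').
have [f [fi fF fle [p fp]]] := sat_ext S XF.
have fF' : forall u, u != p -> f u \in F.
  move=> u up'; have := fF u; rewrite !inE; case/orP => // /eqP E.
  by move: up'; rewrite -(inj_eq fi) E fp eqxx.
case: (pickP (fun q => f q == W)) => [q /eqP fq|none].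
  have pq : p != q by apply/negP => /eqP E; move: XW; rewrite -fp -fq E eqxx.
  have [r [rp rq /orP[]]] := Nle_twin pq; rewrite !fle fp fq.
    by rewrite up ?eqxx // fF'.
  rewrite down ?eqxx // ?fF' //.
  by apply/negP => /eqP E; move: rq; rewrite -(inj_eq fi) E fq eqxx.
case: S => nc _; apply: nc.
pose g u := if u == p then W else f u.
have gF : forall u, g u \in F.
  by move=> u; rewrite /g; case: eqP => [_|/eqP up']; [exact WF | exact: fF'].
have gle : forall u v, Nle u v = (g u \subset g v).
  move=> u v; rewrite fle /g; case: (eqVneq u p) => [->|up']; case: (eqVneq v p) => [->|vp];
    rewrite ?fp //.
  - by rewrite !subxx.
  - by rewrite up // fF'.
  - by rewrite down ?fF' // (none u).

exists g; split => //.
move=> u v E; apply: Nle_antisym; by rewrite gle E subxx.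
Qed.

Lemma sat_low F : induced_saturated Nle F -> up_log 2 n <= #|F|.
Proof.
move=> S; apply: up_log_min => //.
pose phi (x : 'I_n) := [set T in F | x \in T].
have phi_inj : injective phi.
  move=> x y E; apply/eqP; apply/negPn/negP => xy.
  apply: (sat_sep S xy) => T TF.
  have : (T \in phi x) = (T \in phi y) by rewrite E.
  by rewrite !inE TF.
rewrite -card_powerset -[n in n <= _]card_ord -(card_imset _ phi_inj).
apply: subset_leq_card; apply/subsetP => _ /imsetP[x _ ->].
by rewrite inE; apply/subsetP => T; rewrite inE => /andP[].
Qed.
End Low.

Set Implicit Arguments. Unset Strict Implicit. Unset Printing Implicit Defensive.

Lemma copy4 (n : nat) (G : {set {set 'I_n}}) (a b c d : {set 'I_n}) :
  a \in G -> b \in G -> c \in G -> d \in G ->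
  (a \subset b) -> (c \subset b) -> (c \subset d) ->
  ~~ (b \subset a) -> ~~ (a \subset c) -> ~~ (c \subset a) ->
  ~~ (a \subset d) -> ~~ (d \subset a) -> ~~ (b \subset c) ->
  ~~ (b \subset d) -> ~~ (d \subset b) -> ~~ (d \subset c) ->
  has_induced_copy Nle G.
Proof.
move=> aG bG cG dG ab cb cd ba ac ca ad da bc bd db dc.
pose f (u : 'I_4) := nth set0 [:: a; b; c; d] u.
have fle : forall u v, Nle u v = (f u \subset f v).
  move=> u v; case: u => [[|[|[|[|?]]]] Hu] //; case: v => [[|[|[|[|?]]]] Hv] //;
  rewrite /f /= ?subxx ?ab ?cb ?cd ?(negbTE ba) ?(negbTE ac) ?(negbTE ca) ?(negbTE ad)
     ?(negbTE da) ?(negbTE bc) ?(negbTE bd) ?(negbTE db) ?(negbTE dc) //.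
exists f; split; last split.
- by move=> u v E; apply: Nle_antisym; rewrite fle E subxx.
- by move=> u; case: u => [[|[|[|[|?]]]] Hu].
- exact: fle.
Qed.

Section Up.
Variable n : nat.
Definition downc (A : {set 'I_n}) :=
  [forall x : 'I_n, forall y : 'I_n, (y \in A) ==> (x <= y) ==> (x \in A)].
Definition F0 : {set {set 'I_n}} := [set A : {set 'I_n} | (#|A| <= 1) || downc A].

Lemma downc_total (A B : {set 'I_n}) : downc A -> downc B -> (A \subset B) || (B \subset A).
Proof.
move=> /forallP dA /forallP dB; case: (boolP (A \subset B)) => //= /subsetPn [x xA xB].
apply/subsetP => y yB; case: (leqP x y) => [xy|yx].
  by move: xB; have /forallP/(_ y) := dB x; rewrite yB xy /= => ->.
by have /forallP/(_ x) := dA y; rewrite xA (ltnW yx).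
Qed.

Lemma F0_free : ~ has_induced_copy Nle F0.
Proof.
move=> [f [fi [fF fle]]].
pose o0 := @Ordinal 4 0 isT. pose o1 := @Ordinal 4 1 isT.
pose o2 := @Ordinal 4 2 isT. pose o3 := @Ordinal 4 3 isT.
have small : forall u v w, Nle u v -> u != v -> ~~ Nle u w -> #|f v| <= 1 -> False.
  move=> u v w uv neq uw cv.
  have pr : f u \proper f v.
    rewrite properEneq -fle uv andbT (inj_eq fi) //.
  have := proper_card pr => lt.
  have e0 : f u = set0 by apply/eqP; rewrite -cards_eq0 -leqn0 -ltnS (leq_trans lt cv).
  by move: uw; rewrite fle e0 sub0set.
have dn : forall v, (exists u w, [/\ Nle u v, u != v & ~~ Nle u w]) -> downc (f v).
  move=> v [u [w [uv neq uw]]]; have := fF v; rewrite inE; case/orP => // cv.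
  by case: (small u v w uv neq uw cv).
have d1 : downc (f o1) by apply: dn; exists o0, o2.
have d3 : downc (f o3) by apply: dn; exists o2, o0.
by have := downc_total d1 d3; rewrite -!fle.
Qed.
End Up.

Set Implicit Arguments. Unset Strict Implicit. Unset Printing Implicit Defensive.

Section Up2.
Variable n : nat.

Lemma notsub1 (X : {set 'I_n}) y : 1 < #|X| -> ~~ (X \subset [set y]).
Proof.
move=> c; apply/negP => /subset_leq_card; rewrite cards1 => h.
by move: (leq_trans c h).
Qed.

Lemma key (G : {set {set 'I_n}}) (X : {set 'I_n}) (x y c z : 'I_n) :
  F0 n \subset G -> X \in G -> y \in X -> c \in X -> c <= x -> x < y ->
  1 < #|X| -> z <= x -> z \notin X -> has_induced_copy Nle G.
Proof.
move=> sG XG yX cX cx xy cX2 zx zX.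
have sing : forall w : 'I_n, [set w] \in G.
  by move=> w; apply: (subsetP sG); rewrite inE cards1.
have dG : [set w : 'I_n | w <= x] \in G.
  apply: (subsetP sG); rewrite inE; apply/orP; right.
  apply/forallP => u; apply/forallP => v; rewrite !inE; apply/implyP => vx; apply/implyP => uv.
  exact: leq_trans uv vx.
have yc : y != c by apply/eqP => E; move: xy; rewrite E ltnNge cx.
apply: (copy4 (sing y) XG (sing c) dG).
- by rewrite sub1set.
- by rewrite sub1set.
- by rewrite sub1set inE.
- exact: notsub1.
- by rewrite sub1set inE.
- by rewrite sub1set inE eq_sym.
- by rewrite sub1set inE -ltnNge.
- apply/subsetPn; exists c; first by rewrite inE.
  by rewrite inE eq_sym.
- exact: notsub1.
- by apply/subsetPn; exists y => //; rewrite inE -ltnNge.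
- by apply/subsetPn; exists z => //; rewrite inE.
- apply/subsetPn; exists z; rewrite inE //.
  by apply/eqP => E; move: zX; rewrite E cX.
Qed.

Lemma F0_sat : 0 < n -> forall F' : {set {set 'I_n}}, F0 n \proper F' -> has_induced_copy Nle F'.
Proof.
move=> n0 F' /properP [sF [X XF' XF0]].
move: XF0; rewrite inE negb_or -ltnNge => /andP[c2 nd].
pose z0 : 'I_n := Ordinal n0.
move: nd => /forallPn [x /forallPn [y]]; rewrite !negb_imply => /andP[yX /andP[xy xX]].
have xy' : x < y.
  by rewrite ltn_neqAle xy andbT; apply/eqP => E; move: xX; rewrite (val_inj E) yX.
case: (boolP (z0 \in X)) => z0X.
  apply: (key sF XF' yX z0X _ xy' c2 (leqnn x) xX) => //.
case/card_gt1P: c2 => [u [v [uX vX uv]]].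
have [u' [v' [u'X v'X lt]]] : exists u' v' : 'I_n, [/\ u' \in X, v' \in X & u' < v'].
  case: (ltngtP u v) => h; first by exists u, v.
    by exists v, u.
  by move: uv; rewrite (val_inj h) eqxx.
apply: (key sF XF' v'X u'X (leqnn u') lt _ _ z0X) => //.
by apply/card_gt1P; exists u, v.
Qed.
End Up2.

Set Implicit Arguments. Unset Strict Implicit. Unset Printing Implicit Defensive.

Section Cnt.
Variable n : nat.
Definition gmap (u : 'I_n + 'I_n) : {set 'I_n} :=
  match u with inl i => [set x : 'I_n | x < i]
             | inr i => if val i == 0 then setT else [set i] end.

Lemma F0_card : 1 < n -> #|F0 n| <= 2 * n.
Proof.
move=> n1; have n0 : 0 < n by apply: ltnW.
pose z0 : 'I_n := Ordinal n0. pose z1 : 'I_n := Ordinal n1.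
have -> : 2 * n = #|{: 'I_n + 'I_n}| by rewrite card_sum card_ord mul2n addnn.
rewrite -cardsT; apply: leq_trans (leq_imset_card gmap _).
apply: subset_leq_card; apply/subsetP => A; rewrite inE => /orP[c1|dA].
  move: c1; rewrite leq_eqVlt ltnS leqn0 => /orP[/cards1P [k ->]|].
    case: (eqVneq (val k) 0) => k0.
      apply/imsetP; exists (inl z1) => //; apply/setP => w; rewrite !inE /=.
      by rewrite ltnS leqn0 -k0.
    by apply/imsetP; exists (inr k) => //=; rewrite (negbTE k0).
  move/eqP/cards0_eq ->; apply/imsetP; exists (inl z0) => //.
case: (boolP [exists x, x \notin A]) => [ex|].
  have [x [xA xmin]] : exists x : 'I_n, x \notin A /\ forall y : 'I_n, y \notin A -> x <= y.
    case/existsP: ex => x0 x0A.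
    case: (@arg_minnP _ x0 (fun x => x \notin A) (fun x : 'I_n => val x) x0A) => x xA xm.
    by exists x; split.
  apply/imsetP; exists (inl x) => //; apply/setP => w; rewrite inE.
  apply/idP/idP => [wA|wx].
    rewrite ltnNge; apply/negP => xw.
    by move: xA; have /forallP/(_ x)/forallP/(_ w) := dA; rewrite wA xw /= => ->.
  by apply/negPn/negP => /xmin; rewrite leqNgt wx.
move/existsPn => allA; apply/imsetP; exists (inr z0) => //=.
by apply/setP => w; rewrite inE; have := allA w; rewrite negbK.
Qed.
End Cnt.


Theorem theorem1p6 (n : nat) (hn : 3 <= n) :
  (forall F : {set {set 'I_n}}, induced_saturated Nle F -> up_log 2 n <= #|F|) /\
  (exists F : {set {set 'I_n}}, induced_saturated Nle F /\ #|F| <= 2 * n).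
Proof.
split; first by move=> F S; apply: sat_low.
exists (F0 n); split; last by apply: F0_card; apply: leq_trans hn.
split; first exact: F0_free.
by apply: F0_sat; apply: leq_trans hn.
Qed.
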